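(* Let $T$ be a commutative ring with identity, $S$ a unital subring and $I$ a nil ideal of $T$ with $T=S+I$ and $S\cap I=\{0\}$. Then: (1) $T$ is almost complemented if and only if $S$ is almost complemented; (2) $T$ is $\pi$-complemented if and only if $S$ is $\pi$-complemented and $I$ is a torsion-free $S$-module; (3) $T$ has Property $D^\flat$ if and only if $S$ has Property $D^\flat$.
   Context: For a ring $A$, $\mathfrak{N}(A)$ is the nilradical, $\mathrm{reg}(A)$ the regular elements, $\mathrm{areg}(A)=\{x: x+\mathfrak{N}(A)\in\mathrm{reg}(A/\mathfrak{N}(A))\}$. An element $a$ is complemented if there is $b$ with $ab=0$, $a+b\in\mathrm{reg}(A)$; $A$ is complemented if all elements are; $A$ is almost complemented if $A/\mathfrak{N}(A)$ is complemented; $A$ is $\pi$-complemented if every element has a complemented power. $A$ has Property $D^\flat$ if $A\setminus\mathfrak{N}(A)=\mathrm{areg}(A)$. An $S$-module $M$ is torsion-free if $rm=0$ with $r\in\mathrm{reg}(S)$ implies $m=0$. *)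

(* Defs.v *)
From HB Require Import structures.
From mathcomp Require Import all_boot all_order all_algebra.
Set Implicit Arguments. Unset Strict Implicit. Unset Printing Implicit Defensive.
Import GRing.Theory.
Local Open Scope ring_scope.

Section RingNotions.
Variable A : comPzRingType.

Definition in_nilrad (x : A) : Prop := exists n : nat, x ^+ n = 0.

Definition regular (x : A) : Prop := forall y : A, x * y = 0 -> y = 0.

(* areg(A): x + N(A) is regular in A / N(A), written on representatives:
   (x + N)(y + N) = 0 in A/N  <->  x*y in N,  and  y + N = 0 <-> y in N *)
Definition areg (x : A) : Prop := forall y : A, in_nilrad (x * y) -> in_nilrad y.

Definition complemented_elt (a : A) : Prop :=
  exists b : A, a * b = 0 /\ regular (a + b).

Definition complemented_ring : Prop := forall a : A, complemented_elt a.

(* A/N(A) is complemented, written on representatives: for every class a + N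
   there is b + N with (a+N)(b+N) = 0 and (a+N)+(b+N) regular in A/N. *)
Definition almost_complemented : Prop :=
  forall a : A, exists b : A, in_nilrad (a * b) /\ areg (a + b).

Definition pi_complemented : Prop :=
  forall a : A, exists n : nat, complemented_elt (a ^+ n.+1).

Definition property_Dflat : Prop := forall x : A, ~ in_nilrad x <-> areg x.

End RingNotions.

(* I (a subset of T) is an S-module via the embedding f : S -> T, s.m := f s * m;
   torsion-free: r regular in S, m in I, r.m = 0 implies m = 0 *)
Definition torsion_free (S T : comPzRingType) (f : S -> T) (I : {pred T}) : Prop :=
  forall (r : S) (m : T), regular r -> m \in I -> f r * m = 0 -> m = 0.

(* Main.v *)
Require Import Defs.
From mathcomp Require Import all_boot all_order all_algebra ring zify.
Set Implicit Arguments. Unset Strict Implicit. Unset Printing Implicit Defensive.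
Import GRing.Theory.
Local Open Scope ring_scope.

Lemma down_lem (T : comPzRingType) (j m : T) (N : nat) : j ^+ N = 0 ->
  (forall p, j ^+ p.+1 * m = 0 -> j ^+ p * m = 0) -> m = 0.
Proof.
move=> hN hs.
have H : forall q p, (N <= q + p)%N -> j ^+ p * m = 0.
  elim=> [|q IH] p hp.
    by rewrite add0n in hp; rewrite -(subnKC hp) exprD hN mul0r mul0r.
  by apply: hs; apply: IH; rewrite addnS -addSn.
by rewrite -[m]mul1r -(expr0 j); apply: (H N 0%N); rewrite addn0.
Qed.

Lemma reg_down (T : comPzRingType) (x j m : T) : regular x -> in_nilrad j ->
  (x - j) * m = 0 -> m = 0.
Proof.
move=> rx [N hN] h.
have xm : x * m = j * m by apply/eqP; rewrite -subr_eq0 -mulrBl h.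
apply: (down_lem hN) => p hp; apply: rx.
by rewrite mulrCA xm mulrA -exprSr.
Qed.

Lemma reg_mul (T : comPzRingType) (x y : T) : regular x -> regular y -> regular (x * y).
Proof. by move=> rx ry z h; apply: ry; apply: rx; rewrite mulrA. Qed.

Lemma reg_pow (T : comPzRingType) (x : T) n : regular x -> regular (x ^+ n).
Proof.
move=> rx; elim: n => [|n IH]; first by move=> z; rewrite expr0 mul1r.
by rewrite exprS; apply: reg_mul.
Qed.

Lemma xy0pow (T : comPzRingType) (x y : T) n : x * y = 0 ->
  (x + y) ^+ n.+1 = x ^+ n.+1 + y ^+ n.+1.
Proof.
move=> h; elim: n => [|n IH]; first by rewrite !expr1.
rewrite exprS IH mulrDl !mulrDr -!exprS.
have -> : x * y ^+ n.+1 = 0 by rewrite exprS mulrA h mul0r.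
have -> : y * x ^+ n.+1 = 0 by rewrite exprS mulrA (mulrC y) h mul0r.
by rewrite addr0 add0r.
Qed.

Lemma kill_lem (T : comPzRingType) (x y c : T) k N : x ^+ k * c = 0 -> y ^+ N = 0 ->
  (x + y) ^+ (k + N) * c = 0.
Proof.
move=> hx hy.
have H : forall n p q, (p + q + n = k + N)%N -> x ^+ p * y ^+ q * (x + y) ^+ n * c = 0.
  elim=> [|n IH] p q e.
    rewrite addn0 in e; rewrite expr0 mulr1.
    case: (leqP k p) => hp.
      rewrite -(subnKC hp) exprD.
      have -> : x ^+ k * x ^+ (p - k) * y ^+ q * c = (x ^+ k * c) * (x ^+ (p - k) * y ^+ q) by ring.
      by rewrite hx mul0r.
    have hq : (N <= q)%N by rewrite -(leq_add2l p) e leq_add2r ltnW.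
    by rewrite -(subnKC hq) exprD hy mul0r mulr0 mul0r.
  rewrite exprSr !mulrA mulrDr mulrDl -!mulrA.
  have e1 : (p.+1 + q + n = k + N)%N by rewrite -e; lia.
  have e2 : (p + q.+1 + n = k + N)%N by rewrite -e; lia.
  have := IH _ _ e1; have := IH _ _ e2.
  rewrite !exprS => h2 h1.
  rewrite !mulrA.
  have -> : x ^+ p * y ^+ q * (x + y) ^+ n * x * c = x * x ^+ p * y ^+ q * (x + y) ^+ n * c.
    by ring.
  have -> : x ^+ p * y ^+ q * (x + y) ^+ n * y * c = x ^+ p * (y * y ^+ q) * (x + y) ^+ n * c.
    by ring.
  by rewrite h1 h2 addr0.
have := H (k + N)%N 0%N 0%N (erefl _).
by rewrite !expr0 !mul1r.
Qed.

Lemma comp_pow (T : comPzRingType) (x c : T) k K : x ^+ k.+1 * c = 0 ->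
  regular (x ^+ k.+1 + c) -> (k <= K)%N -> regular (x ^+ K.+1 + c).
Proof.
move=> h r hk u hu.
have xKc : x ^+ K.+1 * c = 0.
  by rewrite -(subnKC hk) -addSn exprD mulrAC h mul0r.
have cu : c * u = 0.
  apply: r; rewrite mulrDl mulrA h mul0r add0r.
  have -> : c * (c * u) = c * ((x ^+ K.+1 + c) * u) - (x ^+ K.+1 * c) * u by ring.
  by rewrite hu xKc mulr0 mul0r subr0.
have xu : x ^+ K.+1 * u = 0.
  by move: hu; rewrite mulrDl cu addr0.
have rK := reg_pow (n:=K.+1) r.
apply: rK; rewrite xy0pow; last exact: h.
rewrite mulrDl -exprM.
have hle : (K.+1 <= k.+1 * K.+1)%N by rewrite leq_pmull.
rewrite -(subnK hle) exprD -mulrA xu mulr0 add0r.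
by rewrite exprSr -mulrA cu mulr0.
Qed.
Theorem mainTheorem11 (S T : comPzRingType) (f : {rmorphism S -> T})
  (I : {pred T})
  (f_inj : injective f)
  (I0 : 0 \in I)
  (IB : forall x y, x \in I -> y \in I -> x - y \in I)
  (IM : forall t x, x \in I -> t * x \in I)
  (Inil : forall x, x \in I -> in_nilrad x)
  (TSI : forall t : T, exists (s : S) (i : T), i \in I /\ t = f s + i)
  (SI0 : forall s : S, f s \in I -> f s = 0) :
  (almost_complemented T <-> almost_complemented S) /\
  (pi_complemented T <-> pi_complemented S /\ torsion_free f I) /\
  (property_Dflat T <-> property_Dflat S).
Proof.
have IN : forall y, y \in I -> - y \in I by move=> y hy; rewrite -sub0r; apply: IB.
have IA : forall x y, x \in I -> y \in I -> x + y \in I.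
  by move=> x y hx hy; rewrite -[y]opprK; apply: IB => //; apply: IN.
pose cg (x y : T) := x - y \in I.
have cgr : forall x, cg x x by move=> x; rewrite /cg subrr.
have cgs : forall x y, cg x y -> cg y x by move=> x y h; rewrite /cg -opprB; apply: IN.
have cgt : forall x y z, cg x y -> cg y z -> cg x z.
  by move=> x y z h1 h2; rewrite /cg -(subrKA y); apply: IA.
have cgD : forall a a' b b', cg a a' -> cg b b' -> cg (a + b) (a' + b').
  by move=> a a' b b' h1 h2; rewrite /cg opprD addrACA; apply: IA.
have cgM : forall a a' b b', cg a a' -> cg b b' -> cg (a * b) (a' * b').
  move=> a a' b b' h1 h2; rewrite /cg.
  have -> : a * b - a' * b' = a * (b - b') + b' * (a - a') by ring.
  by apply: IA; apply: IM.
have cgI : forall x i, i \in I -> cg (x + i) x by move=> x i hi; rewrite /cg addrAC subrr add0r.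
have cgIl : forall x y, cg x y -> x - y \in I by [].
have cgX : forall a b n, cg a b -> cg (a ^+ n) (b ^+ n).
  move=> a b n h; elim: n => [|n IH]; first by rewrite !expr0.
  by rewrite !exprS; apply: cgM.
have dec : forall t, exists s, cg t (f s).
  by move=> t; have [s [i [hi ->]]] := TSI t; exists s; apply: cgI.
have f0 : forall x, f x = 0 -> x = 0 by move=> x h; apply: f_inj; rewrite h rmorph0.
have fI : forall x, f x \in I -> x = 0 by move=> x h; apply: f0; apply: SI0.
have cg0 : forall x, cg x 0 -> x \in I by move=> x; rewrite /cg subr0.
have nilT : forall t s, cg t (f s) -> (in_nilrad t <-> in_nilrad s).
  move=> t s h; split.
    move=> [n hn]; exists n; apply: fI; rewrite rmorphXn.
    by have := cgs _ _ (cgX _ _ n h); rewrite hn /cg subr0.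
  move=> [n hn]; have := cgX _ _ n h; rewrite -rmorphXn hn rmorph0 => /cg0 /Inil [m hm].
  by exists (n * m)%N; rewrite exprM.
have aregT : forall t s, cg t (f s) -> (areg t <-> areg s).
  move=> t s h; split.
    move=> H u hu; apply/(nilT (f u) u (cgr _)); apply: H.
    have e : cg (t * f u) (f (s * u)) by rewrite rmorphM; apply: cgM.
    by apply/(nilT _ _ e).
  move=> H y hy; have [u hu] := dec y; apply/(nilT _ _ hu); apply: H.
  have e : cg (t * y) (f (s * u)) by rewrite rmorphM; apply: cgM.
  by apply/(nilT _ _ e).
split.
  split.
    move=> H s; have [b [h1 h2]] := H (f s); have [b' hb] := dec b.
    exists b'; split.
      by apply: (nilT _ _ _).1 h1; rewrite rmorphM; apply: cgM.
    by apply: (aregT _ _ _).1 h2; rewrite rmorphD; apply: cgD.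
  move=> H a; have [s hs] := dec a; have [b' [h1 h2]] := H s.
  exists (f b'); split.
    by apply: (nilT _ _ _).2 h1; rewrite rmorphM; apply: cgM.
  by apply: (aregT _ _ _).2 h2; rewrite rmorphD; apply: cgD.
split; last first.
  split.
    move=> H x; rewrite -(nilT (f x) x (cgr _)) -(aregT (f x) x (cgr _)); exact: H.
  move=> H t; have [s hs] := dec t; rewrite (nilT _ _ hs) (aregT _ _ hs); exact: H.
have G1 : forall (x : T) (c : S), regular x -> cg x (f c) -> regular c.
  move=> x c rx hx u hu; apply: f0; apply: (reg_down rx (Inil _ hx)).
  have -> : x - (x - f c) = f c by ring.
  by rewrite -rmorphM hu rmorph0.
have killb : forall (r c : S) (b : T), cg b (f c) -> f r * b = 0 -> r * c = 0.
  move=> r c b hb h; apply: fI.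
  have -> : f (r * c) = - (f r * (b - f c)) by rewrite mulrBr h sub0r opprK rmorphM.
  by apply: IN; apply: IM.
split.
  move=> H; split.
    move=> s; have [n [b [h1 h2]]] := H (f s); exists n.
    have [c hc] := dec b; exists c.
    have e : s ^+ n.+1 * c = 0 by apply: (killb _ _ b) => //; rewrite rmorphXn.
    split => //; apply: (G1 _ _ h2).
    by rewrite rmorphD rmorphXn; apply: cgD.
  move=> r m rr hm hrm; have [n [b [h1 h2]]] := H (f r).
  have [c hc] := dec b.
  have e : r ^+ n.+1 * c = 0 by apply: (killb _ _ b) => //; rewrite rmorphXn.
  have c0 : c = 0 by apply: (reg_pow (n:=n.+1) rr).
  rewrite c0 rmorph0 in hc.
  apply: (reg_down h2 (Inil _ (cg0 _ hc))).
  by rewrite addrK exprSr -mulrA hrm mulr0.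
move=> [H tf] a; have [s hs] := dec a; have [N hN] := Inil _ hs.
have [n [c [h1 h2]]] := H s.
have G2 : forall (r : S) (x : T), regular r -> cg x (f r) -> regular x.
  move=> r x rr hx y hy; have [u hu] := dec y.
  have u0 : u = 0.
    apply: rr; apply: fI; apply: cg0; apply: cgs.
    by rewrite -hy rmorphM; apply: cgM.
  rewrite u0 rmorph0 in hu; have yI := cg0 _ hu.
  have [M hM] := Inil _ hx.
  apply: (down_lem hM) => p hp; apply: (tf r) => //; first by apply: IM.
  have -> : f r * ((x - f r) ^+ p * y) = (x - f r) ^+ p * (x * y) - (x - f r) ^+ p.+1 * y.
    by rewrite exprSr; ring.
  by rewrite hy hp mulr0 subr0.
exists (n + N)%N, (f c); split.
  have := kill_lem (x := f s) (y := a - f s) (c := f c) (k := n.+1) (N := N).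
  have -> : f s + (a - f s) = a by ring.
  rewrite addSn; apply => //.
  by rewrite -rmorphXn -rmorphM h1 rmorph0.
apply: (G2 (s ^+ (n + N).+1 + c)).
  by apply: (comp_pow h1 h2); rewrite leq_addr.
by rewrite rmorphD rmorphXn; apply: cgD => //; apply: cgX.
Qed.
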